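(* Let $n\ge 2$ be even. Then there exists no matching mechanism that is resolute and symmetric (i.e. $G^*$-symmetric).
   Context: Fix $n\ge 2$, $W=\{1,\dots,n\}$ (women), $M=\{n+1,\dots,2n\}$ (men), $I=W\cup M$. Permutations compose right-to-left. A preference profile is a function $p$ on $I$ assigning to each $x\in W$ a linear order $p(x)$ on $M$ and to each $y\in M$ a linear order $p(y)$ on $W$; $\mathcal{P}$ is the set of preference profiles. A matching is a permutation $\mu$ of $I$ with $\mu(W)=M$, $\mu(M)=W$ and $\mu(\mu(z))=z$ for all $z\in I$; $\mathcal{M}$ is the set of matchings. Let $G^*=\{\varphi\in\mathrm{Sym}(I):\{\varphi(W),\varphi(M)\}=\{W,M\}\}$. For a linear order $R$ on $X\subseteq I$ and $\varphi\in\mathrm{Sym}(I)$, $\varphi R$ is the relation on $\varphi(X)$ with $(a,b)\in\varphi R$ iff $(\varphi^{-1}(a),\varphi^{-1}(b))\in R$. For $p\in\mathcal{P}$ and $\varphi\in G^*$, $p^\varphi\in\mathcal{P}$ is defined by $p^\varphi(z)=\varphi\,p(\varphi^{-1}(z))$. For a permutation $\mu$, $\mu^\varphi=\varphi\mu\varphi^{-1}$, and for a set $S$ of permutations $S^\varphi=\{\mu^\varphi:\mu\in S\}$. A matching mechanism is a correspondence $F$ from $\mathcal{P}$ to $\mathcal{M}$ (a map assigning to each $p$ a subset $F(p)\subseteq\mathcal{M}$). $F$ is resolute if $|F(p)|=1$ for all $p$. For $U\subseteq G^*$, $F$ is $U$-symmetric if $F(p^\varphi)=F(p)^\varphi$ for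 all $p\in\mathcal{P}$, $\varphi\in U$; symmetric means $G^*$-symmetric. *)

(* Defs.v *)
From mathcomp Require Import all_boot all_order all_fingroup.
Set Implicit Arguments. Unset Strict Implicit. Unset Printing Implicit Defensive.
Import GroupScope.

(* Agents I = {0,...,2n-1}: women W = {0..n-1} (paper's 1..n),
   men M = {n..2n-1} (paper's n+1..2n). *)
Notation agent n := 'I_(n + n).

Definition women (n : nat) : {set agent n} := [set i : agent n | i < n].
Definition men (n : nat) : {set agent n} := [set i : agent n | n <= i].

(* A binary relation on agents, stored as a finite function (so equality is
   extensional). *)
Definition relI (n : nat) := {ffun agent n * agent n -> bool}.

Definition linear_order_on (n : nat) (X : {set agent n}) (R : relI n) : bool :=
  [&& [forall a, forall b, R (a, b) ==> (a \in X) && (b \in X)],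
      [forall a, ~~ R (a, a)],
      [forall a, forall b, forall c, R (a, b) && R (b, c) ==> R (a, c)] &
      [forall a in X, forall b in X, (a != b) ==> R (a, b) || R (b, a)]].

Definition profile_t (n : nat) := {ffun agent n -> relI n}.

Definition is_profile (n : nat) (p : profile_t n) : bool :=
  [forall x in women n, linear_order_on (men n) (p x)] &&
  [forall y in men n, linear_order_on (women n) (p y)].

Definition rel_act (n : nat) (phi : {perm agent n}) (R : relI n) : relI n :=
  [ffun ab => R ((phi^-1)%g ab.1, (phi^-1)%g ab.2)].

Definition prof_act (n : nat) (phi : {perm agent n}) (p : profile_t n) : profile_t n :=
  [ffun z => rel_act phi (p ((phi^-1)%g z))].

Definition is_matching (n : nat) (mu : {perm agent n}) : bool :=
  [&& mu @: women n == men n, mu @: men n == women n &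
      [forall z, mu (mu z) == z]].

Definition matchings (n : nat) : {set {perm agent n}} :=
  [set mu | is_matching mu].

Definition Gstar (n : nat) : {set {perm agent n}} :=
  [set phi : {perm agent n} | ((phi @: women n == women n) && (phi @: men n == men n)) ||
             ((phi @: women n == men n) && (phi @: men n == women n))].

(* MathComp's conjugation
   mu ^ phi = phi^-1 * mu * phi (with left-to-right composition), i.e. the
   function x |-> phi (mu (phi^-1 x)), which is phi o mu o phi^-1. *)
Definition set_conj (n : nat) (S : {set {perm agent n}}) (phi : {perm agent n})
  : {set {perm agent n}} := [set mu ^ phi | mu in S].

(* A matching mechanism: a correspondence from P to M.  We represent it by a
   function on all candidate profiles whose values on genuine profiles are
   sets of matchings (values off P are irrelevant). *)
Definition is_mechanism (n : nat) (F : profile_t n -> {set {perm agent n}}) : Prop :=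
  forall p, is_profile p -> F p \subset matchings n.

Definition resolute (n : nat) (F : profile_t n -> {set {perm agent n}}) : Prop :=
  forall p, is_profile p -> #|F p| = 1%N.

Definition U_symmetric (n : nat) (U : {set {perm agent n}})
  (F : profile_t n -> {set {perm agent n}}) : Prop :=
  forall p phi, is_profile p -> phi \in U ->
    F (prof_act phi p) = set_conj (F p) phi.

Definition Gstar_symmetric (n : nat) (F : profile_t n -> {set {perm agent n}}) : Prop :=
  U_symmetric (Gstar n) F.

(* Main.v *)
Require Import Defs.
From mathcomp Require Import all_boot all_order all_fingroup zify.


Lemma oddm (a:nat) : odd a = (a %% 2 == 1). Proof. by rewrite modn2; case: odd. Qed.

Definition posn {n} (i : agent n) : nat := if i < n then 2 * i else (2 * (i - n)).+1.
Lemma posn_lt {n} (i : agent n) : posn i < n + n.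
Proof. rewrite /posn; have := ltn_ord i; case: ifP => h; lia. Qed.
Definition posf {n} (i : agent n) : agent n := Ordinal (posn_lt i).
Lemma posf_inj n : injective (@posf n).
Proof.
move=> i j /(congr1 val) /=; rewrite /posn => h; apply: val_inj => /=.
move: h; case: ifP => hi; case: ifP => hj; rewrite ?oddm; lia.
Qed.
Definition pos n : {perm agent n} := perm (@posf_inj n).
Definition sh n : {perm agent n} := perm (@ordS_inj (n + n)).
Definition phi n : {perm agent n} := (pos n * sh n * (pos n)^-1)%g.

Lemma posE n (i : agent n) : val (pos n i) = posn i.
Proof. by rewrite permE. Qed.

Lemma pos_phi n (x : agent n) : pos n (phi n x) = ordS (pos n x).
Proof. by rewrite /phi !permM permKV permE. Qed.

Lemma shval n (k : agent n) : val (ordS k) = if k.+1 < n + n then k.+1 else 0.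
Proof.
rewrite /=; have := ltn_ord k; case: ifP => h1 h2.
  by rewrite modn_small.
have -> : k.+1 = n + n by lia.
by rewrite modnn.
Qed.

Lemma pos_phiV n (x : agent n) :
  val (pos n ((phi n)^-1%g x)) = if val (pos n x) == 0 then (n + n).-1 else (val (pos n x)).-1.
Proof.
set y := (phi n)^-1%g x.
have : val (pos n (phi n y)) = val (pos n x) by rewrite /y permKV.
rewrite pos_phi shval; have := ltn_ord (pos n y); case: ifP => h1 h2 <-; [by rewrite /=; lia | rewrite /=; lia].
Qed.

Lemma in_women n (x : agent n) : (x \in women n) = ~~ odd (val (pos n x)).
Proof. rewrite inE posE /posn; case: ifP => h; rewrite oddm; lia. Qed.
Lemma in_men n (x : agent n) : (x \in men n) = odd (val (pos n x)).
Proof. rewrite inE posE /posn; case: ifP => h; rewrite oddm; lia. Qed.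

Lemma odd_phiV n (x : agent n) : odd (val (pos n ((phi n)^-1%g x))) = ~~ odd (val (pos n x)).
Proof. rewrite pos_phiV; have := ltn_ord (pos n x); case: ifP => h1 h2; rewrite !oddm; lia. Qed.

Lemma phi_Gstar n : phi n \in Gstar n.
Proof.
rewrite inE; apply/orP; right; apply/andP; split; apply/eqP/setP => x;
 rewrite -preim_permV inE ?in_women ?in_men odd_phiV ?in_women ?in_men ?negbK //.
Qed.

Definition dd {n} (z a : agent n) : nat :=
  if val (pos n z) <= val (pos n a) then val (pos n a) - val (pos n z)
  else val (pos n a) + (n + n) - val (pos n z).

Definition P n : profile_t n :=
  [ffun z => [ffun ab : agent n * agent n =>
    [&& odd (val (pos n ab.1)) != odd (val (pos n z)),
        odd (val (pos n ab.2)) != odd (val (pos n z)) &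
        dd z ab.1 < dd z ab.2]]].

Lemma dd_inj {n} (z a b : agent n) : dd z a = dd z b -> a = b.
Proof.
rewrite /dd => h; apply: (@perm_inj _ (pos n)); apply: val_inj.
have := ltn_ord (pos n a); have := ltn_ord (pos n b); have := ltn_ord (pos n z).
move: h; case: ifP => h1; case: ifP => h2; simpl in *; lia.
Qed.

Lemma P_lin n (z : agent n) :
  linear_order_on [set a | odd (val (pos n a)) != odd (val (pos n z))] (P n z).
Proof.
apply/and4P; split.
- apply/forallP => a; apply/forallP => b; rewrite !ffunE /= !inE.
  by apply/implyP => /and3P [-> -> _].
- by apply/forallP => a; rewrite !ffunE /= ltnn !andbF.
- apply/forallP => a; apply/forallP => b; apply/forallP => c; rewrite !ffunE /=.
  apply/implyP => /andP [/and3P [-> _ h1] /and3P [_ -> h2]] /=.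
  exact: ltn_trans h1 h2.
- apply/forallP => a; apply/implyP; rewrite inE => ha.
  apply/forallP => b; apply/implyP; rewrite inE => hb.
  apply/implyP => hab; rewrite !ffunE /= ha hb /=.
  case: (ltngtP (dd z a) (dd z b)) => // h.
  by move: hab; rewrite (@dd_inj n z a b h) eqxx.
Qed.

Lemma P_prof n : is_profile (P n).
Proof.
apply/andP; split; apply/forallP => x; apply/implyP => hx.
- have -> : men n = [set a | odd (val (pos n a)) != odd (val (pos n x))].
    apply/setP => a; move: hx; rewrite in_women in_men inE.
    by case: (odd _); case: (odd _).
  exact: P_lin.
- have -> : women n = [set a | odd (val (pos n a)) != odd (val (pos n x))].
    apply/setP => a; move: hx; rewrite in_men in_women inE.
    by case: (odd _); case: (odd _).
  exact: P_lin.
Qed.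

Lemma dd_phiV n (z a : agent n) : dd ((phi n)^-1%g z) ((phi n)^-1%g a) = dd z a.
Proof.
rewrite /dd !pos_phiV.
have : val (pos n a) < n + n := ltn_ord _; have : val (pos n z) < n + n := ltn_ord _.
move: (val (pos n a)) (val (pos n z)) => u v.
case: eqP => h1; case: eqP => h2; case: ifP => h3; case: ifP => h4; lia.
Qed.

Lemma P_inv n : prof_act (phi n) (P n) = P n.
Proof.
apply/ffunP => z; apply/ffunP => -[a b]; rewrite /prof_act /rel_act !ffunE.
rewrite !odd_phiV !dd_phiV /=.
by case: (odd _); case: (odd _); case: (odd _).
Qed.

Lemma no_fix n (hn : 0 < n) (hev : ~~ odd n) (mu : {perm agent n}) :
  mu \in matchings n -> (mu ^ phi n)%g = mu -> False.
Proof.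
rewrite inE => /and3P [/eqP hW _ /forallP hinv] hc.
have comm : forall x, mu (phi n x) = phi n (mu x).
  by move=> x; rewrite -{1}hc permJ.
have hN0 : 0 < n + n by lia.
pose o : agent n := Ordinal hN0.
pose y0 := ((pos n)^-1)%g o.
pose c := val (pos n (mu y0)).
have hcN : c < n + n := ltn_ord _.
have claim : forall k (hk : k < n + n),
   val (pos n (mu ((pos n)^-1%g (Ordinal hk)))) = if k + c < n + n then k + c else k + c - (n + n).
  elim => [|k IH] hk.
    have -> : Ordinal hk = o by apply: val_inj.
    by rewrite add0n hcN.
  have hk' : k < n + n by lia.
  have -> : Ordinal hk = ordS (Ordinal hk').
    by apply: val_inj; rewrite shval /= hk.
  set y := ((pos n)^-1)%g (Ordinal hk').
  have -> : ((pos n)^-1)%g (ordS (Ordinal hk')) = phi n y.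
    by apply: (@perm_inj _ (pos n)); rewrite pos_phi /y !permKV.
  rewrite comm pos_phi shval IH.
clear IH; clearbody c; case: (ltnP (k + c) (n + n)) => h1; repeat case: ifP => ?; lia.
have hy0 : y0 \in women n by rewrite in_women /y0 permKV.
have hmy0 : mu y0 \in men n by rewrite -hW; apply: imset_f.
rewrite in_men -/c in hmy0.
have := claim c hcN.
have -> : ((pos n)^-1)%g (Ordinal hcN) = mu y0.
  apply: (@perm_inj _ (pos n)); rewrite permKV; exact: val_inj.
rewrite (eqP (hinv y0)) /y0 permKV /=.
move: hmy0 hev; rewrite !oddm; case: ifP => h; lia.
Qed.

Theorem theorem2 (n : nat) (hn : 2 <= n) (heven : ~~ odd n) :
  ~ exists F : profile_t n -> {set {perm agent n}},
      [/\ is_mechanism F, resolute F & Gstar_symmetric F].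
Proof.
move=> [F [Hmech Hres Hsym]].
have hp := P_prof n.
have [mu hF] := cards1P (introT eqP (Hres _ hp)).
have hmu : mu \in matchings n.
  by apply: (subsetP (Hmech _ hp)); rewrite hF set11.
have := Hsym _ _ hp (phi_Gstar n).
rewrite P_inv hF /set_conj imset_set1 => /set1_inj hc.
have hn0 : 0 < n by lia.
exact: (@no_fix n hn0 heven mu hmu (esym hc)).
Qed.
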